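(* Let $\bar\pi^*$ be an optimal (cost-minimizing) policy for $\bar{\mathcal M}$ with state-action value $\bar Q^*$ and state value $\bar V^*$. Let $G_0$ be the set of intervention rules $(\bar Q,\mu,0)$ (threshold $\eta=0$) that are admissible and satisfy $\bar Q(d_0,\mu)=\bar V^*(d_0)$. Then $\mathcal G^*=(\bar Q^*,\bar\pi^*,0)\in G_0$, and for any $\mathcal G\in G_0$ and any policy $\pi$, $$\mathrm{Supp}_{\mathcal S\times\mathcal A}(\tilde d^{\pi})\subseteq \mathrm{Supp}_{\mathcal S\times\mathcal A}(\tilde d^{*,\pi}),$$ where $\tilde d^\pi$ and $\tilde d^{*,\pi}$ are the discounted state-action distributions of $\pi$ in the absorbing MDPs induced by $\mathcal G$ and $\mathcal G^*$ respectively, and $\mathrm{Supp}_{\mathcal S\times\mathcal A}(d)=\{(s,a)\in\mathcal S\times\mathcal A: d(s,a)>0\}$.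
   Context: $\mathcal M=(\mathcal S,\mathcal A,P,r,\gamma)$ is a discounted MDP with discrete state and action spaces (minima over actions attained), reward $r\in[0,1]$, discount $\gamma\in[0,1)$, initial distribution $d_0$. $\mathcal S$ contains two distinguished states $s_\triangleright,s_\circ$; $\mathcal S_{\mathrm{unsafe}}=\{s_\triangleright,s_\circ\}$, $\mathcal S_{\mathrm{safe}}=\mathcal S\setminus\mathcal S_{\mathrm{unsafe}}$; from $s_\triangleright$ every action leads to $s_\circ$ w.p. 1, $s_\circ$ is absorbing, $r=0$ on $\mathcal S_{\mathrm{unsafe}}$, $d_0(s_\circ)=0$. Cost $c(s,a)=\mathbb 1\{s=s_\triangleright\}$; $\bar{\mathcal M}=(\mathcal S,\mathcal A,P,c,\gamma)$; an optimal policy of $\bar{\mathcal M}$ minimizes the expected discounted cost from every state. For $g:\mathcal S\times\mathcal A\to\mathbb R$, $g(s,\mu)=\mathbb E_{a\sim\mu(\cdot|s)}g(s,a)$, $g(d_0,\mu)=\mathbb E_{s\sim d_0}g(s,\mu)$; $\bar V^*(d_0)=\mathbb E_{s\sim d_0}\bar V^*(s)$. Intervention rule: a triple $\mathcal G=(\bar Q,\mu,\eta)$ with backup policy $\mu$, $\eta\in[0,1]$, $\bar Q:\mathcal S_{\mathrm{safe}}\times\mathcal A\to[0,1]$ extended by $\bar Q(s_\triangleright,a)=1$, $\bar Q(s_\circ,a)=0$; intervention set $\mathcal I=\{(s,a)\in\mathcal S_{\mathrm{safe}}\times\mathcal A:\bar Q(s,a)-\bar Q(s,\mu)>\eta\}$.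 It is admissible if for all $s\in\mathcal S_{\mathrm{safe}},a$: $\bar Q(s,a)\in[0,\gamma]$ and $\bar Q(s,a)\ge c(s,a)+\gamma\mathbb E_{s'\sim P(\cdot|s,a)}[\bar Q(s',\mu)]$. Absorbing MDP induced by $\mathcal G$ (with a constant $\tilde R\le0$): state space $\mathcal S\cup\{s_\dagger\}$; reward $\tilde R$ on $\mathcal I$, $0$ at $s_\dagger$, $r$ otherwise; from $(s,a)\in\mathcal I$ or from $s_\dagger$ the next state is $s_\dagger$ w.p. 1, otherwise transitions follow $P$. Policies are extended to $s_\dagger$ arbitrarily. The discounted state-action distribution of $\pi$ is $\tilde d^\pi(s,a)=(1-\gamma)\sum_t\gamma^t\Pr(s_t=s,a_t=a)$ for trajectories of $\pi$ from $s_0\sim d_0$ in this MDP. *)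

(* Defs.v *)
From HB Require Import structures.
From mathcomp Require Import all_boot all_order all_algebra.
From mathcomp Require Import all_classical all_reals.
From mathcomp Require Import ereal topology normedtype sequences esum.
Set Implicit Arguments. Unset Strict Implicit. Unset Printing Implicit Defensive.
Import Order.TTheory GRing.Theory Num.Theory.
Local Open Scope classical_set_scope.
Local Open Scope ring_scope.
Local Open Scope ereal_scope.

Section Defs.
Variables (R : realType).

Definition is_distr (T : choiceType) (p : T -> R) :=
  (forall x, (0 <= p x)%R) /\ \esum_(x in [set: T]) (p x)%:E = 1.

Definition is_policy (T A : choiceType) (pol : T -> A -> R) :=
  forall s, is_distr (pol s).

(* state marginals Pr(s_t = x) of the trajectory of [pol] in the MDP with
   transition kernel [K] and initial distribution [init] *)
Fixpoint flow (T A : choiceType) (K : T -> A -> T -> R) (pol : T -> A -> R)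
  (init : T -> \bar R) (t : nat) : T -> \bar R :=
  match t with
  | 0%N => init
  | t'.+1 => fun y => \esum_(x in [set: T]) \esum_(a in [set: A])
                 (flow K pol init t' x * (pol x a)%:E * (K x a y)%:E)
  end.

Variables (S A : choiceType) (s_tri s_circ : S) (P : S -> A -> S -> R)
  (gamma : R).

Definition safe (s : S) : bool := (s != s_tri) && (s != s_circ).

Definition cost (s : S) (a : A) : R := if s == s_tri then 1%R else 0%R.

Definition dirac (s : S) : S -> \bar R := fun x => if x == s then 1 else 0.

Definition Vc (mu : S -> A -> R) (s : S) : \bar R :=
  \sum_(t <oo) ((gamma ^+ t)%:E *
     \esum_(x in [set: S]) \esum_(a in [set: A])
        (flow P mu (dirac s) t x * (mu x a)%:E * (cost x a)%:E)).

Definition Qc (mu : S -> A -> R) (s : S) (a : A) : \bar R :=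
  (cost s a)%:E + gamma%:E * \esum_(s' in [set: S]) ((P s a s')%:E * Vc mu s').

Definition optimal_policy (mu : S -> A -> R) :=
  is_policy mu /\
  forall nu : S -> A -> R, is_policy nu -> forall s, Vc mu s <= Vc nu s.

Definition at_pol (g : S -> A -> \bar R) (mu : S -> A -> R) (s : S) : \bar R :=
  \esum_(a in [set: A]) ((mu s a)%:E * g s a).

Definition at_init (d0 : S -> R) (f : S -> \bar R) : \bar R :=
  \esum_(s in [set: S]) ((d0 s)%:E * f s).

(* Qbar : S_safe x A -> [0,1], extended by 1 on s_tri and 0 on s_circ *)
Definition is_Qbar (Q : S -> A -> \bar R) :=
  (forall s a, safe s -> 0 <= Q s a <= 1) /\
  (forall a, Q s_tri a = 1) /\ (forall a, Q s_circ a = 0).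

Definition interv (Q : S -> A -> \bar R) (mu : S -> A -> R) (eta : R)
  (s : S) (a : A) : bool :=
  safe s && (Q s a - at_pol Q mu s > eta%:E).

Definition admissible (Q : S -> A -> \bar R) (mu : S -> A -> R) :=
  forall s a, safe s ->
    (0 <= Q s a <= gamma%:E) /\
    Q s a >= (cost s a)%:E +
             gamma%:E * \esum_(s' in [set: S]) ((P s a s')%:E * at_pol Q mu s').

Definition in_G0 (d0 : S -> R) (Vstar : S -> \bar R)
  (Q : S -> A -> \bar R) (mu : S -> A -> R) :=
  is_Qbar Q /\ is_policy mu /\ admissible Q mu /\
  at_init d0 (at_pol Q mu) = at_init d0 Vstar.

(* absorbing MDP induced by (Q, mu, eta); state space option S,
   None = s_dagger *)
Definition Pabs (Q : S -> A -> \bar R) (mu : S -> A -> R) (eta : R)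
  (x : option S) (a : A) (y : option S) : R :=
  match x with
  | None => if y is None then 1%R else 0%R
  | Some s =>
      if interv Q mu eta s a then (if y is None then 1%R else 0%R)
      else (if y is Some s' then P s a s' else 0%R)
  end.

Definition init_abs (d0 : S -> R) (x : option S) : \bar R :=
  if x is Some s then (d0 s)%:E else 0.

Definition dtilde (d0 : S -> R) (Q : S -> A -> \bar R) (mu : S -> A -> R)
  (eta : R) (pi : option S -> A -> R) (s : S) (a : A) : \bar R :=
  (1 - gamma)%:E * \sum_(t <oo) ((gamma ^+ t)%:E *
     (flow (Pabs Q mu eta) pi (init_abs d0) t (Some s) * (pi (Some s) a)%:E)).

End Defs.

(* Main.v *)
Require Import Defs.
From HB Require Import structures.
From mathcomp Require Import all_boot all_order all_algebra.
From mathcomp Require Import all_classical all_reals.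
From mathcomp Require Import ereal topology normedtype sequences esum.
Import Order.TTheory GRing.Theory Num.Theory.
Local Open Scope classical_set_scope.
Local Open Scope ring_scope.
Local Open Scope ereal_scope.

Section Gen.
Context {R : realType}.

Lemma esum_le_term [T : choiceType] (a : T -> \bar R) i :
  (forall j, 0 <= a j) -> a i <= \esum_(j in [set: T]) a j.
Proof.
move=> a0; apply: esum_ge; exists [set i]; first by split; [exact: finite_set1|].
by rewrite fsbig_set1.
Qed.

Lemma esum_gt0P [T : choiceType] [a : T -> \bar R] :
  (forall j, 0 <= a j) -> 0 < \esum_(j in [set: T]) a j -> exists i, 0 < a i.
Proof.
move=> a0 H; apply: contrapT => H'.
suff : \esum_(j in [set: T]) a j = 0 by move=> e; rewrite e ltxx in H.
apply: esum1 => i _; apply/eqP; rewrite eq_le a0 andbT.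
by rewrite leNgt; apply/negP => ai; apply: H'; exists i.
Qed.

Lemma esum_eq0P (T : choiceType) (a : T -> \bar R) i :
  (forall j, 0 <= a j) -> \esum_(j in [set: T]) a j = 0 -> a i = 0.
Proof.
move=> a0 e; apply/eqP; rewrite eq_le a0 andbT -e; exact: esum_le_term.
Qed.


Lemma esumZl (T : choiceType) (x : \bar R) (a : T -> \bar R) :
  0 <= x -> (forall j, 0 <= a j) ->
  \esum_(j in [set: T]) (x * a j) = x * \esum_(j in [set: T]) a j.
Proof.
move=> x0 a0; apply/eqP; rewrite eq_le; apply/andP; split.
  apply: ge_ereal_sup => _ [X [finX _] <-].
  rewrite fsbig_finite//= -ge0_sume_distrr//.
  apply: lee_wpmul2l => //; apply: esum_ge; exists X => //.
  by rewrite fsbig_finite.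
case: x x0 => [r r0||//]; last first.
  move=> _.
  have [e0|] := eqVneq (\esum_(j in [set: T]) a j) 0.
    by rewrite e0 mule0; apply: esum_ge0 => j _; rewrite mule_ge0.
  move=> ne0; have : 0 < \esum_(j in [set: T]) a j by rewrite lt0e ne0 esum_ge0.
  move=> /[dup] gt0 /(esum_gt0P a0) [i ai]; rewrite gt0_mulye//.
  have h := esum_le_term (fun j => +oo * a j) i.
  rewrite gt0_mulye// in h; apply: h => j; by rewrite mule_ge0.
rewrite lee_fin in r0.
have [r_gt0|] := ltP 0%R r; last first.
    move=> r_le0; have -> : r = 0%R by apply/eqP; rewrite eq_le r_le0 r0.
    by rewrite mul0e; apply: esum_ge0 => j _; rewrite mul0e.
  rewrite /esum -ereal_sup_pZl//; apply: ge_ereal_sup => _ [_ [X XD <-] <-].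
  apply: ereal_sup_ubound; exists X => //.
  case: XD => finX _; rewrite !fsbig_finite//= -ge0_sume_distrr// => *; exact: a0.
Qed.

Lemma esumZr (T : choiceType) (x : \bar R) (a : T -> \bar R) :
  0 <= x -> (forall j, 0 <= a j) ->
  \esum_(j in [set: T]) (a j * x) = (\esum_(j in [set: T]) a j) * x.
Proof.
move=> x0 a0; rewrite [RHS]muleC -esumZl//; apply: eq_esum => j _; exact: muleC.
Qed.

Lemma esum_swap (T1 T2 : choiceType) (a : T1 -> T2 -> \bar R) :
  (forall i j, 0 <= a i j) ->
  \esum_(i in [set: T1]) \esum_(j in [set: T2]) a i j =
  \esum_(j in [set: T2]) \esum_(i in [set: T1]) a i j.
Proof.
move=> a0; rewrite !esum_esum//.
rewrite (reindex_esum (setT `*`` (fun _ => setT)) (setT `*`` (fun _ => setT))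
   (fun k : T1 * T2 => (k.2, k.1))) //.
split.
- by move=> [x y] _.
- by move=> [x y] [x' y'] _ _ [-> ->].
- by move=> [x y] _; exists (y, x).
Qed.

Lemma esum_pt [T : choiceType] (s : T) (f : T -> \bar R) :
  0 <= f s -> (forall x, x != s -> f x = 0) ->
  \esum_(x in [set: T]) f x = f s.
Proof.
move=> f0 fz; rewrite -(@esum_set1 _ _ s f f0) [RHS]esum_mkcond; apply: eq_esum => x _.
have [->|xs] := eqVneq x s; first by rewrite mem_set.
rewrite memNset ?fz//= => e; by rewrite e eqxx in xs.
Qed.

Lemma series_le_term (f : nat -> \bar R) k :
  (forall t, 0 <= f t) -> f k <= \sum_(t <oo) f t.
Proof. by move=> f0; rewrite nneseries_esumT//; exact: esum_le_term. Qed.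

Lemma series_gt0P (f : nat -> \bar R) :
  (forall t, 0 <= f t) -> 0 < \sum_(t <oo) f t -> exists t, 0 < f t.
Proof. by move=> f0; rewrite nneseries_esumT//; exact: esum_gt0P. Qed.

Lemma series_esum_swap (T : choiceType) (f : nat -> T -> \bar R) :
  (forall t x, 0 <= f t x) ->
  \sum_(t <oo) \esum_(x in [set: T]) f t x =
  \esum_(x in [set: T]) \sum_(t <oo) f t x.
Proof.
move=> f0; rewrite nneseries_esumT; last by move=> n; apply: esum_ge0.
rewrite esum_swap//; apply: eq_esum => x _; rewrite nneseries_esumT//.
Qed.

Lemma series_shift (f : nat -> \bar R) :
  (forall t, 0 <= f t) ->
  \sum_(t <oo) f t = f 0%N + \sum_(t <oo) f t.+1.
Proof.
move=> f0; rewrite (nneseries_split 0 1)//= big_nat1; congr (_ + _).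
rewrite -(nneseries_addn 1)//; apply: congr_lim; apply/funext => n.
by apply: eq_bigr => i _; rewrite addn1.
Qed.

Lemma seriesZl (f : nat -> \bar R) (c : R) :
  (forall t, 0 <= f t) ->
  \sum_(t <oo) (c%:E * f t) = c%:E * \sum_(t <oo) f t.
Proof. by move=> f0; rewrite nneseriesZl. Qed.

End Gen.

Section FlowGen.
Context {R : realType} {T A : choiceType}.
Variables (K : T -> A -> T -> R) (pol : T -> A -> R).
Hypothesis K0 : forall x a y, (0 <= K x a y)%R.
Hypothesis pol0 : forall x a, (0 <= pol x a)%R.

Lemma flowS (rho : T -> \bar R) t :
  flow K pol rho t.+1 = fun y => \esum_(x in [set: T]) \esum_(a in [set: A])
                 (flow K pol rho t x * (pol x a)%:E * (K x a y)%:E).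
Proof. by []. Qed.

Lemma flow_ge0 (rho : T -> \bar R) t y :
  (forall x, 0 <= rho x) -> 0 <= flow K pol rho t y.
Proof.
move=> r0; elim: t y => [|t IH] y //=.
apply: esum_ge0 => x _; apply: esum_ge0 => a _.
by rewrite !mule_ge0 ?lee_fin.
Qed.

Lemma flow_lin (rho : T -> \bar R) t z :
  (forall x, 0 <= rho x) ->
  flow K pol rho t z =
  \esum_(x in [set: T]) (rho x * flow K pol (dirac R x) t z).
Proof.
have d0 (x y : T) : 0 <= dirac R x y by rewrite /dirac; case: ifP.
move=> r0; elim: t z => [|t IH] z /=.
  rewrite (esum_pt z); first by rewrite /dirac eqxx mule1.
    by rewrite mule_ge0.
  by move=> x xz; rewrite /dirac eq_sym (negbTE xz) mule0.
transitivity (\esum_(y in [set: T]) \esum_(a in [set: A]) \esum_(x in [set: T])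
   (rho x * (flow K pol (dirac R x) t y * (pol y a)%:E * (K y a z)%:E))).
  apply: eq_esum => y _; apply: eq_esum => a _.
  rewrite IH -esumZr ?lee_fin//; last by move=> x; rewrite mule_ge0// flow_ge0.
  rewrite -esumZr ?lee_fin//; last first.
    by move=> x; rewrite !mule_ge0 ?lee_fin// flow_ge0.
  by apply: eq_esum => x _; rewrite !muleA.
transitivity (\esum_(y in [set: T]) \esum_(x in [set: T]) \esum_(a in [set: A])
   (rho x * (flow K pol (dirac R x) t y * (pol y a)%:E * (K y a z)%:E))).
  apply: eq_esum => y _; apply: esum_swap.
  by move=> a x; rewrite !mule_ge0 ?lee_fin// flow_ge0.
rewrite esum_swap; last first.
  by move=> y x; apply: esum_ge0 => a _; rewrite !mule_ge0 ?lee_fin// flow_ge0.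
apply: eq_esum => x _; rewrite -esumZl//; last first.
  by move=> y; apply: esum_ge0 => a _; rewrite !mule_ge0 ?lee_fin// flow_ge0.
apply: eq_esum => y _; rewrite -esumZl//.
by move=> a; rewrite !mule_ge0 ?lee_fin// flow_ge0.
Qed.

Lemma flow_semi (rho : T -> \bar R) t :
  flow K pol rho t.+1 = flow K pol (flow K pol rho 1) t.
Proof.
elim: t => [|t IH] //; rewrite [LHS]flowS IH; by rewrite [RHS]flowS.
Qed.

End FlowGen.

Lemma muleCA' {R : realType} (x y z : \bar R) : x * (y * z) = y * (x * z).
Proof. by rewrite muleA (muleC x y) -muleA. Qed.

Lemma seriesZl_ext {R : realType} (f : nat -> \bar R) (c : \bar R) :
  0 <= c -> (forall t, 0 <= f t) ->
  \sum_(t <oo) (c * f t) = c * \sum_(t <oo) f t.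
Proof.
move=> c0 f0; rewrite !nneseries_esumT//; first exact: esumZl.
by move=> t; rewrite mule_ge0.
Qed.

Section Mdp.
Context {R : realType} {S A : choiceType}.
Variables (s_tri : S) (P : S -> A -> S -> R) (gamma : R).
Hypothesis P0 : forall s a y, (0 <= P s a y)%R.
Hypothesis g0 : (0 <= gamma)%R.

Definition C (mu : S -> A -> R) (rho : S -> \bar R) t :=
  \esum_(x in [set: S]) \esum_(a in [set: A])
        (flow P mu rho t x * (mu x a)%:E * (cost R s_tri x a)%:E).

Lemma VcE mu s : Vc s_tri P gamma mu s =
  \sum_(t <oo) ((gamma ^+ t)%:E * C mu (dirac R s) t).
Proof. by []. Qed.

Lemma cost_ge0 (x : S) (a : A) : 0 <= (cost R s_tri x a)%:E.
Proof. by rewrite lee_fin /cost; case: ifP. Qed.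

Lemma dirac_ge0 (x y : S) : 0 <= dirac R x y.
Proof. by rewrite /dirac; case: ifP. Qed.

Variable mu : S -> A -> R.
Hypothesis mu0 : forall x a, (0 <= mu x a)%R.

Lemma fl_ge0 rho t y : (forall x, 0 <= rho x) -> 0 <= flow P mu rho t y.
Proof. exact: (flow_ge0 P mu P0 mu0). Qed.

Lemma C_ge0 rho t : (forall x, 0 <= rho x) -> 0 <= C mu rho t.
Proof.
move=> r0; apply: esum_ge0 => x _; apply: esum_ge0 => a _.
by rewrite !mule_ge0 ?cost_ge0 ?lee_fin// fl_ge0.
Qed.

Lemma Vc_ge0 s : 0 <= Vc s_tri P gamma mu s.
Proof.
rewrite VcE; apply: nneseries_ge0 => t _ _.
by rewrite mule_ge0 ?lee_fin ?exprn_ge0// C_ge0// => x; exact: dirac_ge0.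
Qed.

Section Super.
Variable f : S -> \bar R.
Hypothesis f0 : forall x, 0 <= f x.
Hypothesis fsup : forall s,
  \esum_(a in [set: A]) ((mu s a)%:E * ((cost R s_tri s a)%:E +
      gamma%:E * \esum_(y in [set: S]) ((P s a y)%:E * f y))) <= f s.

Lemma super_eq (rho : S -> \bar R) n : (forall x, 0 <= rho x) ->
  \esum_(x in [set: S]) (flow P mu rho n x *
    \esum_(a in [set: A]) ((mu x a)%:E * ((cost R s_tri x a)%:E +
      gamma%:E * \esum_(y in [set: S]) ((P x a y)%:E * f y)))) =
  C mu rho n + gamma%:E * \esum_(y in [set: S]) (flow P mu rho n.+1 y * f y).
Proof.
move=> r0; set F := flow P mu rho n.
have F0 x : 0 <= F x by exact: fl_ge0.
have inner0 x a : 0 <= \esum_(y in [set: S]) ((P x a y)%:E * f y).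
  by apply: esum_ge0 => y _; rewrite mule_ge0 ?lee_fin.
transitivity (\esum_(x in [set: S]) \esum_(a in [set: A])
   (F x * (mu x a)%:E * (cost R s_tri x a)%:E +
    gamma%:E * (F x * (mu x a)%:E *
       \esum_(y in [set: S]) ((P x a y)%:E * f y)))).
  apply: eq_esum => x _; rewrite -esumZl//; last first.
    by move=> a; rewrite mule_ge0 ?lee_fin// adde_ge0 ?cost_ge0// mule_ge0 ?lee_fin.
  apply: eq_esum => a _.
  rewrite ge0_muleDr ?cost_ge0// ?mule_ge0 ?lee_fin//.
  rewrite ge0_muleDr ?mule_ge0 ?cost_ge0 ?lee_fin//.
  rewrite !muleA; congr (_ + _).
  by rewrite [in RHS](muleC gamma%:E) [in RHS](muleAC (F x)).
transitivity (\esum_(x in [set: S]) \esum_(a in [set: A])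
   (F x * (mu x a)%:E * (cost R s_tri x a)%:E) +
   \esum_(x in [set: S]) \esum_(a in [set: A]) (gamma%:E * (F x * (mu x a)%:E *
       \esum_(y in [set: S]) ((P x a y)%:E * f y)))).
  rewrite -esumD; last 2 first.
  - by move=> x _; apply: esum_ge0 => a _; rewrite !mule_ge0 ?cost_ge0 ?lee_fin.
  - move=> x _; apply: esum_ge0 => a _; rewrite mule_ge0 ?lee_fin//.
    by rewrite !mule_ge0 ?lee_fin.
  by apply: eq_esum => x _; rewrite esumD// => a _;
    rewrite !mule_ge0 ?cost_ge0 ?lee_fin ?inner0.
congr (_ + _).
have FmuS0 x a : 0 <= F x * (mu x a)%:E *
       \esum_(y in [set: S]) ((P x a y)%:E * f y).
  by rewrite !mule_ge0 ?lee_fin ?inner0.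
transitivity (gamma%:E * \esum_(x in [set: S]) \esum_(a in [set: A])
   (F x * (mu x a)%:E * \esum_(y in [set: S]) ((P x a y)%:E * f y))).
  rewrite -esumZl ?lee_fin//; last by move=> x; apply: esum_ge0 => a _.
  by apply: eq_esum => x _; rewrite -esumZl ?lee_fin.
congr (_ * _).
transitivity (\esum_(x in [set: S]) \esum_(a in [set: A]) \esum_(y in [set: S])
   (F x * (mu x a)%:E * (P x a y)%:E * f y)).
  apply: eq_esum => x _; apply: eq_esum => a _; rewrite -esumZl.
  - by apply: eq_esum => y _; rewrite muleA.
  - by rewrite mule_ge0 ?lee_fin.
  - by move=> y; rewrite mule_ge0 ?lee_fin.
have H0 x a y : 0 <= F x * (mu x a)%:E * (P x a y)%:E * f y.
  by rewrite !mule_ge0 ?lee_fin.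
transitivity (\esum_(x in [set: S]) \esum_(y in [set: S]) \esum_(a in [set: A])
   (F x * (mu x a)%:E * (P x a y)%:E * f y)).
  by apply: eq_esum => x _; apply: esum_swap.
rewrite esum_swap; last by move=> x y; apply: esum_ge0.
apply: eq_esum => y _; rewrite flowS -esumZr//; last first.
  by move=> x; apply: esum_ge0 => a _; rewrite !mule_ge0 ?lee_fin.
apply: eq_esum => x _; rewrite -esumZr//.
by move=> a; rewrite !mule_ge0 ?lee_fin.
Qed.


Lemma super_le (rho : S -> \bar R) n : (forall x, 0 <= rho x) ->
  (C mu rho n + gamma%:E * \esum_(y in [set: S]) (flow P mu rho n.+1 y * f y))
  <= \esum_(x in [set: S]) (flow P mu rho n x * f x).
Proof.
move=> r0; rewrite -super_eq//; apply: le_esum => x _.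
by apply: lee_wpmul2l; [exact: fl_ge0|exact: fsup].
Qed.

Lemma super_nstep (rho : S -> \bar R) n : (forall x, 0 <= rho x) ->
 (\sum_(0 <= t < n) ((gamma ^+ t)%:E * C mu rho t) +
  (gamma ^+ n)%:E * \esum_(y in [set: S]) (flow P mu rho n y * f y))
  <= \esum_(x in [set: S]) (rho x * f x).
Proof.
move=> r0; elim: n => [|n IH].
  by rewrite big_nil add0e expr0 mul1e.
apply: le_trans IH; rewrite big_nat_recr// -addeA; apply: leeD => //.
rewrite exprSr EFinM -muleA -ge0_muleDr; last 2 first.
- exact: C_ge0.
- rewrite mule_ge0 ?lee_fin//; apply: esum_ge0 => y _.
  by rewrite mule_ge0 ?fl_ge0 ?f0.
apply: lee_wpmul2l; first by rewrite lee_fin exprn_ge0.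
exact: super_le.
Qed.

Lemma Vc_le_super s : Vc s_tri P gamma mu s <= f s.
Proof.
have H0 t : 0 <= (gamma ^+ t)%:E * C mu (dirac R s) t.
  by rewrite mule_ge0 ?lee_fin ?exprn_ge0// C_ge0// => x; exact: dirac_ge0.
rewrite VcE; apply: lime_le; first by apply: is_cvg_nneseries => n _ _.
apply: nearW => n.
have := @super_nstep (dirac R s) n (dirac_ge0 s).
rewrite [X in _ <= X -> _](esum_pt s); last 2 first.
- by rewrite mule_ge0 ?dirac_ge0 ?f0.
- by move=> x xs; rewrite /dirac (negbTE xs) mul0e.
rewrite /dirac eqxx mul1e; apply: le_trans; rewrite leeDl//.
rewrite mule_ge0 ?lee_fin ?exprn_ge0//; apply: esum_ge0 => y _.
by rewrite mule_ge0 ?fl_ge0 ?f0// => x; exact: dirac_ge0.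
Qed.

End Super.
Lemma fld_ge0 x t z : 0 <= flow P mu (dirac R x) t z.
Proof. by apply: fl_ge0 => ?; exact: dirac_ge0. Qed.

Definition w s y := \esum_(a in [set: A]) ((mu s a)%:E * (P s a y)%:E).

Lemma w_ge0 s y : 0 <= w s y.
Proof. by apply: esum_ge0 => a _; rewrite mule_ge0 ?lee_fin. Qed.

Lemma flow1_dirac s : flow P mu (dirac R s) 1 = w s.
Proof.
apply/funext => y /=; rewrite (esum_pt s).
- by apply: eq_esum => a _; rewrite /dirac eqxx mul1e.
- by apply: esum_ge0 => a _; rewrite !mule_ge0 ?lee_fin ?dirac_ge0.
- move=> x xs; apply: esum1 => a _.
  by rewrite /dirac (negbTE xs) !mul0e.
Qed.

Lemma C0 s : C mu (dirac R s) 0 =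
  \esum_(a in [set: A]) ((mu s a)%:E * (cost R s_tri s a)%:E).
Proof.
rewrite /C (esum_pt s).
- by apply: eq_esum => a _; rewrite /= /dirac eqxx mul1e.
- by apply: esum_ge0 => a _; rewrite !mule_ge0 ?fld_ge0 ?cost_ge0 ?lee_fin.
- move=> x xs; apply: esum1 => a _.
  by rewrite /= /dirac (negbTE xs) !mul0e.
Qed.

Lemma CS s t : C mu (dirac R s) t.+1 =
  \esum_(x in [set: S]) (w s x * C mu (dirac R x) t).
Proof.
rewrite /C flow_semi flow1_dirac.
have H0 x z b : 0 <= flow P mu (dirac R x) t z * (mu z b)%:E * (cost R s_tri z b)%:E.
  by rewrite !mule_ge0 ?cost_ge0 ?lee_fin ?fld_ge0.
transitivity (\esum_(z in [set: S]) \esum_(b in [set: A]) \esum_(x in [set: S])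
   (w s x * (flow P mu (dirac R x) t z * (mu z b)%:E * (cost R s_tri z b)%:E))).
  apply: eq_esum => z _; apply: eq_esum => b _.
  rewrite (flow_lin P mu P0 mu0); last exact: w_ge0.
  rewrite -esumZr ?lee_fin//; last by move=> x; rewrite mule_ge0 ?w_ge0 ?fld_ge0.
  rewrite -esumZr ?cost_ge0//; last first.
    by move=> x; rewrite !mule_ge0 ?cost_ge0 ?lee_fin ?w_ge0 ?fld_ge0.
  by apply: eq_esum => x _; rewrite !muleA.
transitivity (\esum_(z in [set: S]) \esum_(x in [set: S]) \esum_(b in [set: A])
   (w s x * (flow P mu (dirac R x) t z * (mu z b)%:E * (cost R s_tri z b)%:E))).
  apply: eq_esum => z _; apply: esum_swap => b x.
  by rewrite mule_ge0 ?w_ge0.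
rewrite esum_swap; last first.
  by move=> z x; apply: esum_ge0 => b _; rewrite mule_ge0 ?w_ge0.
apply: eq_esum => x _; rewrite -esumZl ?w_ge0//; last first.
  by move=> z; apply: esum_ge0 => b _.
apply: eq_esum => z _; rewrite -esumZl ?w_ge0//.
Qed.

Lemma Bellman s : Vc s_tri P gamma mu s =
  \esum_(a in [set: A]) ((mu s a)%:E * ((cost R s_tri s a)%:E +
      gamma%:E * \esum_(y in [set: S]) ((P s a y)%:E * Vc s_tri P gamma mu y))).
Proof.
have Ct0 x t : 0 <= C mu (dirac R x) t by apply: C_ge0 => ?; exact: dirac_ge0.
have gt0 t : 0 <= (gamma ^+ t)%:E by rewrite lee_fin exprn_ge0.
rewrite VcE series_shift; last by move=> t; rewrite mule_ge0.
rewrite expr0 mul1e C0.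
transitivity (\esum_(a in [set: A]) ((mu s a)%:E * (cost R s_tri s a)%:E) +
   gamma%:E * \esum_(y in [set: S]) (w s y * Vc s_tri P gamma mu y)).
  congr (_ + _).
  transitivity (\sum_(t <oo) (gamma%:E * \esum_(x in [set: S])
                 (w s x * ((gamma ^+ t)%:E * C mu (dirac R x) t)))).
    apply: congr_lim; apply/funext => n; apply: eq_bigr => t _.
    rewrite CS exprS EFinM -muleA; congr (_ * _).
    rewrite -esumZl//; last by move=> x; rewrite mule_ge0 ?w_ge0.
    by apply: eq_esum => x _; rewrite muleCA'.
  rewrite seriesZl; last first.
    by move=> t; apply: esum_ge0 => x _; rewrite !mule_ge0 ?w_ge0.
  congr (_ * _); rewrite series_esum_swap; last first.
    by move=> t x; rewrite !mule_ge0 ?w_ge0.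
  apply: eq_esum => y _; rewrite seriesZl_ext ?w_ge0// => t.
  by rewrite mule_ge0.
have V0 y := Vc_ge0 y.
have PV0 a : 0 <= \esum_(y in [set: S]) ((P s a y)%:E * Vc s_tri P gamma mu y).
  by apply: esum_ge0 => y _; rewrite mule_ge0 ?lee_fin.
symmetry.
transitivity (\esum_(a in [set: A]) ((mu s a)%:E * (cost R s_tri s a)%:E +
   gamma%:E * ((mu s a)%:E * \esum_(y in [set: S]) ((P s a y)%:E * Vc s_tri P gamma mu y)))).
  apply: eq_esum => a _; rewrite ge0_muleDr ?cost_ge0//; last by rewrite mule_ge0 ?lee_fin.
  by rewrite muleCA'.
rewrite esumD; last 2 first.
- by move=> a _; rewrite mule_ge0 ?cost_ge0 ?lee_fin.
- by move=> a _; rewrite !mule_ge0 ?lee_fin.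
congr (_ + _); rewrite esumZl ?lee_fin//; last by move=> a; rewrite mule_ge0 ?lee_fin.
congr (_ * _).
transitivity (\esum_(a in [set: A]) \esum_(y in [set: S])
    ((mu s a)%:E * (P s a y)%:E * Vc s_tri P gamma mu y)).
  apply: eq_esum => a _; rewrite -esumZl ?lee_fin//; last by move=> y; rewrite mule_ge0 ?lee_fin.
  by apply: eq_esum => y _; rewrite muleA.
rewrite esum_swap; last by move=> a y; rewrite !mule_ge0 ?lee_fin.
apply: eq_esum => y _; rewrite /w -esumZr//.
by move=> a; rewrite mule_ge0 ?lee_fin.
Qed.


End Mdp.

Lemma prod_gt0 {R : realType} (u v : \bar R) : 0 <= u -> 0 <= v -> 0 < u * v ->
  0 < u /\ 0 < v.
Proof.
move=> u0 v0 H; split; rewrite lt0e ?u0 ?v0 andbT; apply/negP => /eqP e;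
  by rewrite e ?mul0e ?mule0 ltxx in H.
Qed.

Lemma fin01 {R : realType} (x : \bar R) : 0 <= x -> x <= 1 -> x \is a fin_num.
Proof. by move=> x0 x1; rewrite ge0_fin_numE// (le_lt_trans x1)// ltry. Qed.

Lemma distr_pt {R : realType} {T : choiceType} (p : T -> R) y0 y :
  is_distr p -> p y0 = 1%R -> y != y0 -> p y = 0%R.
Proof.
move=> [p0 p1] py0 yy0; apply/eqP; rewrite eq_le p0 andbT -lee_fin.
have : ((p y0)%:E + (p y)%:E <= \esum_(x in [set: T]) (p x)%:E).
  apply: esum_ge; exists [set y0; y].
    split => //; exact: finite_set2.
  rewrite fsbigU0 ?fsbig_set1 //; try exact: finite_set1.
  by move=> x [/= -> e]; rewrite e eqxx in yy0.
by rewrite p1 py0 -[X in _ <= X]adde0 leeD2lE.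
Qed.

Lemma esum_distr_le1 {R : realType} {T : choiceType} (p : T -> R) (f : T -> \bar R) :
  is_distr p -> (forall x, 0 <= f x) -> (forall x, f x <= 1) ->
  \esum_(x in [set: T]) ((p x)%:E * f x) <= 1.
Proof.
move=> [p0 p1] f0 f1; rewrite -p1; apply: le_esum => x _.
by rewrite -[X in _ <= X]mule1 lee_wpmul2l ?lee_fin.
Qed.

Lemma esum_distr_cst {R : realType} {T : choiceType} (p : T -> R) (c : \bar R) :
  is_distr p -> 0 <= c -> \esum_(x in [set: T]) ((p x)%:E * c) = c.
Proof.
move=> [p0 p1] c0; rewrite esumZr// ?p1 ?mul1e// => x; rewrite lee_fin.
Qed.

Lemma eq_on_supp {R : realType} {T : choiceType} (p : T -> R) (g h : T -> \bar R) :
  is_distr p -> (forall x, 0 <= g x) -> (forall x, g x <= h x) ->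
  (forall x, h x <= 1) ->
  \esum_(x in [set: T]) ((p x)%:E * h x) <= \esum_(x in [set: T]) ((p x)%:E * g x) ->
  forall x, (0 < p x)%R -> h x = g x.
Proof.
move=> pd g0 gh h1 Hle x0 px0; have [p0 p1] := pd.
have gf x : g x \is a fin_num by apply: fin01 => //; exact: le_trans (gh x) (h1 x).
have d0 x : 0 <= h x - g x by rewrite sube_ge0 ?gf.
have hE x : h x = (h x - g x) + g x by rewrite subeK.
have Sg : \esum_(x in [set: T]) ((p x)%:E * g x) \is a fin_num.
  apply: fin01; first by apply: esum_ge0 => x _; rewrite mule_ge0 ?lee_fin.
  apply: esum_distr_le1 => // x; exact: le_trans (gh x) (h1 x).
have : (\esum_(x in [set: T]) ((p x)%:E * g x)) +
       (\esum_(x in [set: T]) ((p x)%:E * (h x - g x))) <=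
       (\esum_(x in [set: T]) ((p x)%:E * g x)) + 0.
  rewrite adde0 (le_trans _ Hle)// -esumD; last 2 first.
  - by move=> x _; rewrite mule_ge0 ?lee_fin.
  - by move=> x _; rewrite mule_ge0 ?lee_fin.
  by apply: le_esum => x _; rewrite -ge0_muleDr// addeC -hE.
rewrite leeD2lE// => Hd.
have : (p x0)%:E * (h x0 - g x0) <= 0.
  apply: (le_trans _ Hd); apply: esum_le_term => x; by rewrite mule_ge0 ?lee_fin ?d0.
move=> H1; have : (p x0)%:E * (h x0 - g x0) == 0.
  by rewrite eq_le H1 mule_ge0 ?lee_fin// ltW.
rewrite mule_eq0 eqe (gt_eqF px0) /= => /eqP e.
by rewrite hE e add0e.
Qed.

Lemma pol0 {R : realType} {T B : choiceType} (mu : T -> B -> R) :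
  is_policy mu -> forall x a, (0 <= mu x a)%R.
Proof. by move=> H x a; case: (H x). Qed.

Section Main.
Context {R : realType} {S A : choiceType}.
Variables (s_tri s_circ : S) (P : S -> A -> S -> R) (gamma : R) (d0 : S -> R).
Hypothesis Hne : s_tri != s_circ.
Hypothesis Hg : (0 <= gamma < 1)%R.
Hypothesis HP : forall s a, is_distr (P s a).
Hypothesis Htri : forall a, P s_tri a s_circ = 1%R.
Hypothesis Hcirc : forall a, P s_circ a s_circ = 1%R.

Let P0 s a y : (0 <= P s a y)%R. Proof. by case: (HP s a). Qed.
Let g0 : (0 <= gamma)%R. Proof. by case/andP: Hg. Qed.
Let g1 : (gamma <= 1)%R. Proof. by case/andP: Hg => _ /ltW. Qed.

Local Notation V mu := (Vc s_tri P gamma mu).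
Local Notation safe := (safe s_tri s_circ).
Local Notation cost := (@Defs.cost R S A s_tri).

Lemma unsafeP s : ~~ safe s -> s = s_tri \/ s = s_circ.
Proof.
rewrite /Defs.safe negb_and !negbK => /orP[/eqP->|/eqP->]; by [left|right].
Qed.

Lemma P_unsafe1 s a : ~~ safe s -> P s a s_circ = 1%R.
Proof. by case/unsafeP => ->. Qed.

Lemma P_unsafe s a y : ~~ safe s -> y != s_circ -> P s a y = 0%R.
Proof. move=> us; apply: distr_pt => //; exact: P_unsafe1. Qed.

Lemma esum_P_unsafe s a (f : S -> \bar R) : ~~ safe s -> 0 <= f s_circ ->
  \esum_(y in [set: S]) ((P s a y)%:E * f y) = f s_circ.
Proof.
move=> us f0; rewrite (esum_pt s_circ); first by rewrite P_unsafe1// mul1e.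
  by rewrite P_unsafe1// mul1e.
by move=> x xc; rewrite P_unsafe// mul0e.
Qed.

Lemma cost_safe s a : safe s -> cost s a = 0%R.
Proof. by rewrite /Defs.cost => /andP[/negbTE -> _]. Qed.

Lemma cost_tri a : cost s_tri a = 1%R.
Proof. by rewrite /Defs.cost eqxx. Qed.

Lemma cost_circ a : cost s_circ a = 0%R.
Proof. by rewrite /Defs.cost eq_sym (negbTE Hne). Qed.

Lemma safeP s : s != s_tri -> s != s_circ -> safe s.
Proof. by move=> h1 h2; rewrite /Defs.safe h1 h2. Qed.

Section Pol.
Variable mu : S -> A -> R.
Hypothesis Hmu : is_policy mu.
Let mu0 := pol0 _ Hmu.

Lemma pol_sum s c : 0 <= c -> \esum_(a in [set: A]) ((mu s a)%:E * c) = c.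
Proof. by move=> c0; apply: esum_distr_cst. Qed.

Let f1 (y : S) : \bar R := if y == s_circ then 0 else 1.

Lemma V_le_f1 z : V mu z <= f1 z.
Proof.
apply: (Vc_le_super s_tri P gamma P0 g0 mu mu0 f1).
  by move=> x; rewrite /f1; case: ifP.
move=> s.
have f1c : f1 s_circ = 0 by rewrite /f1 eqxx.
have [us|sf] := boolP (~~ safe s).
  have -> : \esum_(a in [set: A]) ((mu s a)%:E * ((cost s a)%:E +
      gamma%:E * \esum_(y in [set: S]) ((P s a y)%:E * f1 y))) =
      \esum_(a in [set: A]) ((mu s a)%:E * (cost s a)%:E).
    apply: eq_esum => a _; rewrite esum_P_unsafe//; last by rewrite /f1 eqxx.
    by rewrite /f1 eqxx mule0 adde0.
  case: (unsafeP s us) => ->.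
    under eq_esum do rewrite cost_tri.
    rewrite pol_sum// /f1; case: eqP => // e; move: Hne; by rewrite e eqxx.
  rewrite esum1 /f1 ?eqxx// => a _; by rewrite cost_circ mule0.
rewrite negbK in sf.
have -> : f1 s = 1 by rewrite /f1; case/andP: sf => _ /negbTE ->.
rewrite -[X in _ <= X](pol_sum s 1)//; apply: le_esum => a _.
apply: lee_wpmul2l; first by rewrite lee_fin.
rewrite cost_safe// add0e -[X in _ <= X]mule1; apply: lee_pmul; rewrite ?lee_fin//.
  by apply: esum_ge0 => y _; rewrite mule_ge0 ?lee_fin// /f1; case: ifP.
apply: esum_distr_le1 => // x; rewrite /f1; case: ifP => //.
Qed.

Lemma V_circ : V mu s_circ = 0.
Proof.
apply/eqP; rewrite eq_le Vc_ge0// andbT; have := V_le_f1 s_circ.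
by rewrite /f1 eqxx.
Qed.

Lemma V_le1 y : V mu y <= 1.
Proof. by apply: le_trans (V_le_f1 y) _; rewrite /f1; case: ifP. Qed.

Lemma V_tri : V mu s_tri = 1.
Proof.
rewrite (Bellman s_tri P gamma P0 g0 mu mu0).
rewrite -[RHS](pol_sum s_tri 1)//; apply: eq_esum => a _.
rewrite esum_P_unsafe; [|by rewrite /Defs.safe eqxx | by rewrite V_circ].
by rewrite V_circ mule0 adde0 cost_tri.
Qed.

End Pol.

Variable pistar : S -> A -> R.
Hypothesis Hopt : optimal_policy s_tri P gamma pistar.
Let Hpi : is_policy pistar. Proof. by case: Hopt. Qed.
Let pi0 := pol0 _ Hpi.

Local Notation Qs := (Qc s_tri P gamma pistar).
Local Notation Vs := (V pistar).

Lemma QsE s a : Qs s a =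
  (cost s a)%:E + gamma%:E * \esum_(y in [set: S]) ((P s a y)%:E * Vs y).
Proof. by []. Qed.

Lemma Vs_ge0 s : 0 <= Vs s. Proof. exact: Vc_ge0. Qed.

Lemma at_pol_Qs s : at_pol Qs pistar s = Vs s.
Proof. by rewrite (Bellman s_tri P gamma P0 g0 pistar pi0). Qed.

Lemma Qs_tri a : Qs s_tri a = 1.
Proof.
rewrite QsE esum_P_unsafe; [|by rewrite /Defs.safe eqxx|by rewrite V_circ].
by rewrite V_circ// mule0 adde0 cost_tri.
Qed.

Lemma Qs_circ a : Qs s_circ a = 0.
Proof.
rewrite QsE esum_P_unsafe; [|by rewrite /Defs.safe eqxx andbF|by rewrite V_circ].
by rewrite V_circ// mule0 adde0 cost_circ.
Qed.

Lemma Qs_safe s a : safe s -> 0 <= Qs s a <= gamma%:E.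
Proof.
move=> sf; rewrite QsE cost_safe// add0e; apply/andP; split.
  by rewrite mule_ge0 ?lee_fin//; apply: esum_ge0 => y _; rewrite mule_ge0 ?lee_fin ?Vs_ge0.
rewrite -[X in _ <= X]mule1; apply: lee_wpmul2l; first by rewrite lee_fin.
by apply: esum_distr_le1 => // y; [exact: Vs_ge0|exact: V_le1].
Qed.

Lemma Qs_ge0 s a : 0 <= Qs s a.
Proof.
have [us|sf] := boolP (~~ safe s).
  by case: (unsafeP s us) => ->; rewrite ?Qs_tri ?Qs_circ.
by rewrite negbK in sf; case/andP: (@Qs_safe s a sf).
Qed.

Lemma Vs_le_Qs s0 a0 : Vs s0 <= Qs s0 a0.
Proof.
rewrite leNgt; apply/negP => Hlt.
pose nu x b : R := if x == s0 then (if b == a0 then 1%R else 0%R) else pistar x b.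
have nu_pol : is_policy nu.
  move=> x; rewrite /nu; case: eqP => _; last exact: Hpi.
  split; first by move=> b; case: ifP.
  by rewrite (esum_pt a0) ?eqxx// => b ba; rewrite (negbTE ba).
have nu0 := pol0 _ nu_pol.
have Hle : forall x, V nu x <= Vs x.
  apply: (Vc_le_super s_tri P gamma P0 g0 nu nu0); first exact: Vs_ge0.
  move=> x; rewrite /nu; have [->|xs] := eqVneq x s0.
    rewrite (esum_pt a0) ?eqxx ?mul1e.
    - exact: ltW.
    - exact: Qs_ge0.
    - by move=> b ba; rewrite (negbTE ba) mul0e.
  rewrite ?(negbTE xs).
  by rewrite [X in _ <= X](Bellman s_tri P gamma P0 g0 pistar pi0).
have Hb := Bellman s_tri P gamma P0 g0 nu nu0 s0.
have nus b : nu s0 b = if b == a0 then 1%R else 0%R by rewrite /nu eqxx.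
rewrite (esum_pt a0) in Hb; last 2 first.
- rewrite mule_ge0 ?lee_fin ?nu0// adde_ge0 ?cost_ge0// mule_ge0 ?lee_fin//.
  by apply: esum_ge0 => y _; rewrite mule_ge0 ?lee_fin ?Vc_ge0.
- by move=> b ba; rewrite nus (negbTE ba) mul0e.
rewrite nus eqxx mul1e in Hb.
have : V nu s0 <= Qs s0 a0.
  rewrite Hb QsE; apply: leeD2l; apply: lee_wpmul2l; first by rewrite lee_fin.
  apply: le_esum => y _; apply: lee_wpmul2l; first by rewrite lee_fin.
  exact: Hle.
move=> H1; have := lt_le_trans Hlt (proj2 Hopt nu nu_pol s0).
by rewrite ltNge H1.
Qed.

Hypothesis Hd0 : is_distr d0.

Lemma Qs_in_G0 : in_G0 s_tri s_circ P gamma d0 Vs Qs pistar.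
Proof.
split; [|split; [exact: Hpi|split]].
- split; [|split]; [|exact: Qs_tri|exact: Qs_circ].
  move=> s a sf; have /andP[-> h] := @Qs_safe s a sf.
  by rewrite (le_trans h)// lee_fin.
- move=> s a sf; split; first exact: Qs_safe.
  rewrite QsE; under eq_esum do rewrite at_pol_Qs; done.
- by rewrite /at_init; apply: eq_esum => s _; rewrite at_pol_Qs.
Qed.

Section G0.
Variables (Q : S -> A -> \bar R) (mu : S -> A -> R).
Hypothesis HG : in_G0 s_tri s_circ P gamma d0 Vs Q mu.
Let HQ : is_Qbar s_tri s_circ Q. Proof. by case: HG. Qed.
Let Hmu : is_policy mu. Proof. by case: HG => _ []. Qed.
Let Hadm : admissible s_tri s_circ P gamma Q mu. Proof. by case: HG => _ [_ []]. Qed.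
Let Hinit : at_init d0 (at_pol Q mu) = at_init d0 Vs.
Proof. by case: HG => _ [_ [_]]. Qed.
Let mu0 := pol0 _ Hmu.

Local Notation fQ := (at_pol Q mu).

Lemma Q_ge0_le1 s a : 0 <= Q s a <= 1.
Proof.
case: HQ => Hs [Ht Hc].
have [us|sf] := boolP (~~ safe s); last by rewrite negbK in sf; exact: Hs.
by case: (unsafeP s us) => ->; rewrite ?Ht ?Hc ?lexx ?lee01 ?le0y.
Qed.

Lemma Q_ge0 s a : 0 <= Q s a. Proof. by case/andP: (Q_ge0_le1 s a). Qed.

Lemma fQ_ge0 s : 0 <= fQ s.
Proof. by apply: esum_ge0 => a _; rewrite mule_ge0 ?lee_fin ?Q_ge0. Qed.

Lemma fQ_le1 s : fQ s <= 1.
Proof.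
rewrite -(pol_sum _ Hmu s 1)//; apply: le_esum => a _.
by apply: lee_wpmul2l; rewrite ?lee_fin//; case/andP: (Q_ge0_le1 s a).
Qed.

Lemma fQ_circ : fQ s_circ = 0.
Proof. by apply: esum1 => a _; case: HQ => _ [_ ->]; rewrite mule0. Qed.

Lemma Qadm s a :
  (cost s a)%:E + gamma%:E * (\esum_(y in [set: S]) ((P s a y)%:E * fQ y)) <= Q s a.
Proof.
have [us|sf] := boolP (~~ safe s); last by rewrite negbK in sf; case: (Hadm s a sf).
rewrite esum_P_unsafe ?fQ_circ ?mule0 ?adde0//.
case: HQ => _ [Ht Hc].
by case: (unsafeP s us) => ->; rewrite ?Ht ?Hc ?cost_tri ?cost_circ.
Qed.

Lemma Vs_le_fQ s : Vs s <= fQ s.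
Proof.
apply: le_trans (proj2 Hopt mu Hmu s) _.
apply: (Vc_le_super s_tri P gamma P0 g0 mu mu0); first exact: fQ_ge0.
move=> x; apply: le_esum => a _; apply: lee_wpmul2l; first by rewrite lee_fin.
exact: Qadm.
Qed.

Lemma fQ_d0 s : (0 < d0 s)%R -> fQ s = Vs s.
Proof.
move=> h; apply: (eq_on_supp d0 Vs fQ Hd0 Vs_ge0 Vs_le_fQ fQ_le1 _ s h).
by move: Hinit; rewrite /at_init => ->.
Qed.

Variable pi : option S -> A -> R.
Hypothesis Hpi' : is_policy pi.
Let pi0' := pol0 _ Hpi'.

Local Notation FG := (flow (Pabs s_tri s_circ P Q mu 0) pi (init_abs d0)).
Local Notation FS := (flow (Pabs s_tri s_circ P Qs pistar 0) pi (init_abs d0)).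

Lemma Pabs_ge0 (Q' : S -> A -> \bar R) mu' x a y :
  (0 <= Pabs s_tri s_circ P Q' mu' 0 x a y)%R.
Proof. by rewrite /Pabs; case: x => [s|]; [case: ifP => _|]; case: y => // *; apply: P0. Qed.

Lemma init_ge0 x : 0 <= init_abs d0 x.
Proof. by case: x => [s|] //=; rewrite lee_fin; case: Hd0. Qed.

Lemma FG_ge0 t x : 0 <= FG t x.
Proof. by apply: flow_ge0 => //; [exact: Pabs_ge0|exact: init_ge0]. Qed.

Lemma FS_ge0 t x : 0 <= FS t x.
Proof. by apply: flow_ge0 => //; [exact: Pabs_ge0|exact: init_ge0]. Qed.

Lemma supp_inv t s : 0 < FG t (Some s) ->
  0 < FS t (Some s) /\ ((0 < gamma)%R -> fQ s = Vs s).
Proof.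
elim: t s => [|t IH] y.
  move=> /= h; split => //; move=> _; apply: fQ_d0; by rewrite -lte_fin.
rewrite [in X in X -> _]flowS => H.
have [x Hx] := esum_gt0P (fun x => esum_ge0 (fun a _ =>
   mule_ge0 (mule_ge0 (FG_ge0 t x) (pi0' x a : 0 <= _%:E)) (Pabs_ge0 _ _ _ _ _ : 0 <= _%:E))) H.
have [a Ha] := esum_gt0P (fun a =>
   mule_ge0 (mule_ge0 (FG_ge0 t x) (pi0' x a : 0 <= _%:E)) (Pabs_ge0 _ _ _ _ _ : 0 <= _%:E)) Hx.
have h0 : 0 <= FG t x * (pi x a)%:E by rewrite mule_ge0 ?FG_ge0 ?lee_fin ?pi0'.
have h1 : 0 <= (Pabs s_tri s_circ P Q mu 0 x a (Some y))%:E by rewrite lee_fin Pabs_ge0.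
have [Hfp HPa] := prod_gt0 _ _ h0 h1 Ha.
have h2 : 0 <= (pi x a)%:E by rewrite lee_fin pi0'.
have [Hf Hpa] := prod_gt0 _ _ (FG_ge0 t x) h2 Hfp.
clear Hx Ha h0 h1 Hfp h2; case: x Hf Hpa HPa => [s|] Hf Hpa HPa; last by rewrite /Pabs lte_fin ltxx in HPa.
have [nIG hP] : interv s_tri s_circ Q mu 0 s a = false /\ (0 < P s a y)%R.
  by move: HPa; rewrite /Pabs lte_fin; case: ifP => // _; rewrite ltxx.
have [hS hV] := IH s Hf.
have Hs_le : safe s -> Qs s a <= Vs s.
  move=> sf; have [gp|gn] := ltP 0%R gamma.
    have h1 : Q s a <= fQ s.
      move: nIG; rewrite /interv sf /= => /negbT; rewrite sube_gt0 -leNgt.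
      done.
    rewrite -(hV gp); apply: le_trans h1; apply: le_trans (Qadm s a).
    rewrite QsE; apply: leeD2l; apply: lee_wpmul2l; first by rewrite lee_fin.
    apply: le_esum => z _; apply: lee_wpmul2l; first by rewrite lee_fin.
    exact: Vs_le_fQ.
  have g00 : gamma = 0%R by apply/eqP; rewrite eq_le gn g0.
  rewrite QsE cost_safe// add0e; apply: le_trans (Vs_ge0 s).
  by rewrite g00 mul0e.
have nIS : interv s_tri s_circ Qs pistar 0 s a = false.
  rewrite /interv; have [sf|//] := boolP (safe s); rewrite /=.
  by apply/negbTE; rewrite at_pol_Qs sube_gt0 -leNgt Hs_le.
split.
  rewrite flowS; apply: (lt_le_trans _ (esum_le_term _ (Some s) _)); last first.
    move=> z; apply: esum_ge0 => b _.
    by rewrite !mule_ge0 ?FS_ge0 ?lee_fin ?pi0' ?Pabs_ge0.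
  apply: (lt_le_trans _ (esum_le_term _ a _)); last first.
    by move=> b; rewrite !mule_ge0 ?FS_ge0 ?lee_fin ?pi0' ?Pabs_ge0.
  by rewrite /Pabs nIS !mule_gt0 ?lte_fin.
move=> gp.
have [us|sf] := boolP (~~ safe s).
  have -> : y = s_circ.
    apply/eqP; apply: contraTT hP => yc; by rewrite P_unsafe// ltxx.
  by rewrite fQ_circ V_circ.
rewrite negbK in sf.
have H1 : Vs s <= gamma%:E * \esum_(z in [set: S]) ((P s a z)%:E * Vs z).
  by have := Vs_le_Qs s a; rewrite QsE cost_safe// add0e.
have H2 : gamma%:E * (\esum_(z in [set: S]) ((P s a z)%:E * fQ z)) <= Vs s.
  have h1 : Q s a <= fQ s.
    move: nIG; rewrite /interv sf /= => /negbT; rewrite sube_gt0 -leNgt.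
    done.
  rewrite -(hV gp); apply: le_trans h1; apply: le_trans (Qadm s a).
  by rewrite cost_safe// add0e.
have H3 := le_trans H2 H1.
rewrite lee_pmul2l ?lte_fin// in H3.
exact: (eq_on_supp (P s a) Vs fQ (HP s a) Vs_ge0 Vs_le_fQ fQ_le1 H3 y hP).
Qed.


Lemma supp_sub s a :
  0 < dtilde s_tri s_circ P gamma d0 Q mu 0 pi s a ->
  0 < dtilde s_tri s_circ P gamma d0 Qs pistar 0 pi s a.
Proof.
rewrite /dtilde => H.
have g1' : (0 < 1 - gamma)%R by rewrite subr_gt0; case/andP: Hg.
have T0 t : 0 <= (gamma ^+ t)%:E * (FG t (Some s) * (pi (Some s) a)%:E).
  by rewrite !mule_ge0 ?FG_ge0 ?lee_fin ?pi0' ?exprn_ge0.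
have T1 t : 0 <= (gamma ^+ t)%:E * (FS t (Some s) * (pi (Some s) a)%:E).
  by rewrite !mule_ge0 ?FS_ge0 ?lee_fin ?pi0' ?exprn_ge0.
have c0 : 0 <= (1 - gamma)%:E by rewrite lee_fin ltW.
have [_ Hser] := prod_gt0 _ _ c0 (nneseries_ge0 (fun t _ _ => T0 t)) H.
have [t Ht] := series_gt0P _ T0 Hser.
have gt0' : 0 <= (gamma ^+ t)%:E by rewrite lee_fin exprn_ge0.
have pa0 : 0 <= (pi (Some s) a)%:E by rewrite lee_fin pi0'.
have [Hgt Hfp] := prod_gt0 _ _ gt0' (mule_ge0 (FG_ge0 t (Some s)) pa0) Ht.
have [Hf Hpa] := prod_gt0 _ _ (FG_ge0 t (Some s)) pa0 Hfp.
have [HS _] := supp_inv t s Hf.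
apply: mule_gt0; first by rewrite lte_fin.
apply: (lt_le_trans _ (series_le_term _ t T1)).
by rewrite !mule_gt0.
Qed.

End G0.
End Main.

Theorem mainTheorem5 (R : realType) (S A : choiceType) (s_tri s_circ : S)
  (P : S -> A -> S -> R) (gamma : R) (d0 : S -> R) :
  s_tri != s_circ ->
  (0 <= gamma < 1)%R ->
  (forall s a, is_distr (P s a)) ->
  (forall a, P s_tri a s_circ = 1%R) ->
  (forall a, P s_circ a s_circ = 1%R) ->
  is_distr d0 -> d0 s_circ = 0%R ->
  forall pistar : S -> A -> R,
  optimal_policy s_tri P gamma pistar ->
  let Qstar := Qc s_tri P gamma pistar in
  let Vstar := Vc s_tri P gamma pistar in
  in_G0 s_tri s_circ P gamma d0 Vstar Qstar pistar /\
  forall (Q : S -> A -> \bar R) (mu : S -> A -> R),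
    in_G0 s_tri s_circ P gamma d0 Vstar Q mu ->
    forall pi : option S -> A -> R, is_policy pi ->
    forall s a,
      0 < dtilde s_tri s_circ P gamma d0 Q mu 0 pi s a ->
      0 < dtilde s_tri s_circ P gamma d0 Qstar pistar 0 pi s a.
Proof.
move=> Hne Hg HP Htri Hcirc Hd0 _ pistar Hopt Qstar Vstar; split.
  exact: (@Qs_in_G0 R S A s_tri s_circ P gamma d0 Hne Hg HP Htri Hcirc pistar Hopt).
move=> Q mu HG pi Hpi s a.
exact: (@supp_sub R S A s_tri s_circ P gamma d0 Hne Hg HP Htri Hcirc pistar Hopt Hd0
  Q mu HG pi Hpi s a).
Qed.
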